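(* Let $\mathcal{G}=(\mathcal{P},\mathcal{L})$ be a Fischer space of symplectic type, let $R$ be a commutative ring with $2=0$, and let $A=M_R(\mathcal{G},1)$ be the nilpotent Matsuo algebra. For each line $\ell\in\mathcal{L}$, let $A^\ell_0$ and $A^\ell_1$ be the eigenspaces of $\operatorname{ad}_\ell$ for the eigenvalues $0$ and $1$. Then for each line $\ell$ we have $A=A^\ell_0\oplus A^\ell_1$, and \[ A^\ell_0A^\ell_0\subseteq A^\ell_0,\quad A^\ell_0A^\ell_1\subseteq A^\ell_1,\quad A^\ell_1A^\ell_1\subseteq A^\ell_0; \] that is, $A$ is a decomposition algebra with the $\mathbb{Z}/2\mathbb{Z}$ fusion law $0*0=\{0\}$, $0*1=1*0=\{1\}$, $1*1=\{0\}$, with one decomposition for each line.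
   Context: A 3-transposition group is a pair $(G,D)$ where $D$ is a conjugacy class of involutions generating $G$ such that $de$ has order at most $3$ for all $d,e\in D$. Its Fischer space $\mathcal{G}=(\mathcal{P},\mathcal{L})$ has point set $\mathcal{P}=D$ and as lines the $3$-subsets consisting of the three involutions of a subgroup isomorphic to $\mathrm{Sym}(3)$. Distinct points $p,q$ are collinear ($p\sim q$) if they lie on a common line (equivalently $pq$ has order $3$), and then $p\wedge q$ is the third point of that line. A subspace is a nonempty subset closed under $\wedge$. The subspace generated by two distinct intersecting lines is always either a complete quadrilateral (6 points, 4 lines, any two lines meet in one point, each point on two lines) or an affine plane of order $3$; $\mathcal{G}$ is of symplectic type if it is always a complete quadrilateral. For a commutative ring $R$ with $2=0$, the nilpotent Matsuo algebra $A=M_R(\mathcal{G},1)$ is the free $R$-module with basis $\mathcal{P}$ and commutative bilinear product $p\cdot q=0$ if $p=q$ or $p\not\sim q$, and $p\cdot q=p+q+p\wedge q$ if $p\sim q$. For a line $\ell$, we also write $\ell$ for the element of $A$ that is the sum of its three points, and $\operatorname{ad}_\ell\colon A\to A$, $v\mapsto \ell v$. The eigenspace for eigenvalue $\lambda$ is $\{v\in A:\ell v=\lambda v\}$. *)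

(* Defs.v *)
From HB Require Import structures.
From mathcomp Require Import all_boot all_algebra.
From mathcomp Require Import finmap.
From mathcomp Require Import monalg.

Set Implicit Arguments.
Unset Strict Implicit.
Unset Printing Implicit Defensive.

Import GRing.Theory.

Local Open Scope fset_scope.

Section Fischer.

Variable G : groupType.

Definition involution (d : G) : Prop := d != 1%g /\ (d * d)%g = 1%g.

Definition order_le3 (x : G) : Prop :=
  exists2 k : nat, (0 < k <= 3)%N & (x ^+ k)%g = 1%g.

Definition three_transposition_group (D : {pred G}) : Prop :=
  [/\
      exists d0 : G, forall x : G, x \in D <-> exists g : G, x = (d0 ^ g)%g,
      forall d, d \in D -> involution d,
      forall S : {pred G}, group_closed S -> {subset D <= S} ->
        forall g : G, g \in S &
      forall d e, d \in D -> e \in D -> order_le3 (d * e)%g].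

Variable D : {pred G}.

Definition point := {x : G | x \in D}.

Definition collinear (p q : point) : bool :=
  (val p != val q) && (((val p * val q) ^+ 3)%g == 1%g).

(* p /\ q : third point on the line through p and q, namely q p q
   (= p q p when p ~ q).  The default value p is never used when
   (G, D) is a 3-transposition group, as D is closed under conjugation. *)
Definition wedge (p q : point) : point :=
  insubd p (val q * val p * val q)%g.

(* A line: the 3-subset {p, q, p /\ q} for collinear p, q, i.e. the three
   involutions of the subgroup <p, q> ~ Sym(3). Lines are subsets of points. *)
Definition is_line (l : point -> Prop) : Prop :=
  exists p q : point, collinear p q /\
    forall x, l x <-> (x = p \/ x = q \/ x = wedge p q).

Definition wedge_closed (S : point -> Prop) : Prop :=
  forall p q, collinear p q -> S p -> S q -> S (wedge p q).

Definition gen_subspace (X : point -> Prop) : point -> Prop :=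
  fun x => forall S : point -> Prop,
    (forall y, X y -> S y) -> wedge_closed S -> S x.

Definition complete_quadrilateral (S : point -> Prop) : Prop :=
  exists (pts : seq point) (lns : seq {fset point}),
    [/\ uniq pts /\ size pts = 6%N, (forall x, S x <-> x \in pts),
        uniq lns, size lns = 4%N &
     [/\
         forall l, l \in lns -> is_line (fun x => x \in l) /\
                                 (forall x, x \in l -> S x),
         forall L : point -> Prop, is_line L -> (forall x, L x -> S x) ->
           (exists2 l, l \in lns & forall x, L x <-> x \in l),
         forall l l', l \in lns -> l' \in lns -> l != l' ->
           #|` l `&` l'| = 1%N &
         forall x, x \in pts -> count (fun l => x \in l) lns = 2%N]].

Definition symplectic_type : Prop :=
  forall l1 l2 : point -> Prop, is_line l1 -> is_line l2 ->
    (exists x, l1 x /\ l2 x) -> ~ (forall x, l1 x <-> l2 x) ->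
    complete_quadrilateral (gen_subspace (fun x => l1 x \/ l2 x)).

Variable R : comNzRingType.

Definition matsuo := {malg R[point]}.

Local Open Scope ring_scope.

Definition bprod (p q : point) : matsuo :=
  if collinear p q then << p >> + << q >> + << wedge p q >> else 0.

Definition mprod (u v : matsuo) : matsuo :=
  \sum_(p <- msupp u) \sum_(q <- msupp v) (u@_p * v@_q) *: bprod p q.

Definition line_elt (p q : point) : matsuo := << p >> + << q >> + << wedge p q >>.

Definition eigen0 (l : matsuo) (v : matsuo) : Prop := mprod l v = 0.
Definition eigen1 (l : matsuo) (v : matsuo) : Prop := mprod l v = v.

End Fischer.

(* Main.v *)
Require Import Defs.
From HB Require Import structures.
From mathcomp Require Import all_boot all_algebra.
From mathcomp Require Import finmap.
From mathcomp Require Import monalg.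
From mathcomp Require Import ring.
Set Implicit Arguments.
Unset Strict Implicit.
Unset Printing Implicit Defensive.

Section GW.
Variable G : groupType.
Local Open Scope group_scope.
Implicit Types W a b c x y z : G.

Lemma cc W x : x * x = 1 -> W * x * x = W.
Proof. by move=> h; rewrite -mulgA h mulg1. Qed.

Lemma ctx3 W x y z x' y' z' : x*y*z = x'*y'*z' -> W*x*y*z = W*x'*y'*z'.
Proof. by move=> h; rewrite -!mulgA [x * (y * z)]mulgA h !mulgA. Qed.

Lemma ctx2 W x y x' y' : x*y = x'*y' -> W*x*y = W*x'*y'.
Proof. by move=> h; rewrite -!mulgA h. Qed.

Lemma inv_inv x : x * x = 1 -> x^-1 = x.
Proof. exact: mulg1_eq. Qed.

Lemma braid3 a b : a * a = 1 -> b * b = 1 -> (a * b) ^+ 3 = 1 -> a * b * a = b * a * b.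
Proof.
move=> ha hb; rewrite !expgS expg0 mulg1 !mulgA => h.
have h' : (a * b * a) * (b * a * b) = 1 by rewrite !mulgA.
have := mulg1_eq h'; rewrite !invgM !inv_inv // => <-.
by rewrite mulgA.
Qed.

Lemma comm_of2 a b : a * a = 1 -> b * b = 1 -> (a * b) ^+ 2 = 1 -> a * b = b * a.
Proof.
move=> ha hb; rewrite expg2 => h.
by have := mulg1_eq h; rewrite invgM !inv_inv.
Qed.

Lemma lineF3 a b : a * a = 1 -> b * b = 1 -> a * b * a = b * a * b ->
  b * a * b * a * (b * a * b) = b.
Proof.
move=> ha hb h; apply: (@mulgI _ 1); rewrite !mulgA.
rewrite (ctx3 1 (esym h)) (cc _ ha) (cc _ hb).
by rewrite (cc _ ha).
Qed.

Lemma lineF4 a b : a * a = 1 -> b * b = 1 -> a * b * a = b * a * b ->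
  b * a * b * b * (b * a * b) = a.
Proof.
move=> ha hb h; apply: (@mulgI _ 1); rewrite !mulgA.
by rewrite (cc _ hb) (ctx3 1 (esym h)) (cc _ ha) (cc _ hb).
Qed.

Lemma lineF5 a b : a * a = 1 -> b * b = 1 -> a * b * a = b * a * b ->
  a * (b * a * b) * a = b.
Proof.
move=> ha hb h; apply: (@mulgI _ 1); rewrite !mulgA.
by rewrite (ctx3 (1 * a) (esym h)) (cc _ ha) (cc _ ha).
Qed.

Lemma F6 a b c : a * a = 1 -> b * b = 1 -> c * c = 1 -> a * c = c * a ->
  a * b * a = b * a * b -> b * c * b = c * b * c ->
  c * b * c * a * (c * b * c) = b * a * b * c * (b * a * b).
Proof.
move=> ha hb hc hac hab hbc; apply: (@mulgI _ 1); rewrite !mulgA.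
rewrite (ctx2 (1*c*b) (esym hac)) (cc _ hc) (ctx3 (1*c) (esym hab)).
rewrite (ctx2 1 (esym hac)) (ctx2 (1*a*c*b) hac) (ctx3 (1*a) (esym hbc)).
rewrite (ctx3 1 (esym hab)) (ctx2 (1*a*b) hac) (ctx3 (1*a*b*c) hab).
by rewrite (cc _ hb).
Qed.


Lemma F7 a b c : b * b = 1 -> c * c = 1 -> c * a = a * c ->
  a * (c * b * c) = c * b * c * a -> a * b = b * a.
Proof.
move=> hb hc hca e.
have L : c * (a * (c * b * c)) * c = a * b.
  apply: (@mulgI _ 1); rewrite !mulgA.
  by rewrite (ctx2 1 hca) (cc _ hc) (cc _ hc).
have Rr : c * (c * b * c * a) * c = b * a.
  apply: (@mulgI _ 1); rewrite !mulgA.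
  by rewrite (cc _ hc) (ctx2 (1 * b) hca) (cc _ hc).
by rewrite -L -Rr e.
Qed.

Lemma N1w a b c : b * b = 1 -> c * c = 1 -> b * c * b = c * b * c ->
  a = c * b * c -> b * a * b = c.
Proof.
move=> hb hc hbc ->; apply: (@mulgI _ 1); rewrite !mulgA.
by rewrite (ctx3 1 hbc) (cc _ hc) (cc _ hb).
Qed.

End GW.

Section Pts.
Variables (G : groupType) (D : {pred G}) (HGD : three_transposition_group D).
Implicit Types a b c x y : point D.

Lemma Dinv (x : G) : x \in D -> (x * x = 1)%g.
Proof. by case: HGD => _ H _ _ /H []. Qed.

Lemma Dconj (x y : G) : x \in D -> y \in D -> (y * x * y)%g \in D.
Proof.
case: HGD => [[d0 Hd0] Hinv _ _] xD yD.
have [g xE] := (Hd0 x).1 xD.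
apply/(Hd0 _).2; exists (g * y)%g.
rewrite conjgM -xE conjgE inv_inv ?mulgA //; exact: Dinv.
Qed.

Lemma invol a : (val a * val a = 1)%g.
Proof. exact: Dinv (valP a). Qed.

Lemma wedgeE a b : val (wedge a b) = (val b * val a * val b)%g.
Proof. by rewrite /wedge insubdK //; apply: Dconj; apply: valP. Qed.

Lemma colE a b : collinear a b = (val a * val b != val b * val a)%g.
Proof.
have ha := invol a; have hb := invol b.
rewrite /collinear; case: (HGD) => _ _ _ Ho.
have [k /andP[k0 k3] hk] := Ho _ _ (valP a) (valP b).
case: (eqVneq (val a * val b)%g (val b * val a)%g) => hc /=.
  apply/negbTE; rewrite negb_and negbK; apply/orP.
  case: (eqVneq (val a) (val b)) => hab; [by left|right].
  have e2 : ((val a * val b) ^+ 2 = 1)%g.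
    by rewrite expg2 {2}hc !mulgA (cc _ hb) ha.
  rewrite expgS e2 mulg1; apply/eqP => e; case/eqP: hab.
  by rewrite -(inv_inv ha); apply: mulg1_eq.
have nab : val a != val b by apply: contraNneq hc => ->.
rewrite nab /=.
move: k0 k3 hk; case: k => [|[|[|[|]]]] //= _ _.
- rewrite expg1 => e; case/eqP: nab.
  by rewrite -(inv_inv ha); apply: mulg1_eq.
- by move=> e; case/eqP: hc; apply: comm_of2.
by move=> h; apply/eqP.
Qed.

Lemma colC a b : collinear a b = collinear b a.
Proof. by rewrite !colE eq_sym. Qed.

Lemma colxx a : collinear a a = false.
Proof. by rewrite colE eqxx. Qed.

Lemma braidP a b : collinear a b -> (val a * val b * val a = val b * val a * val b)%g.
Proof.
rewrite /collinear => /andP[_ /eqP h].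
apply: braid3 (invol a) (invol b) h.
Qed.

Lemma wedgeC a b : collinear a b -> wedge a b = wedge b a.
Proof. by move=> h; apply: val_inj; rewrite !wedgeE (braidP h). Qed.

Lemma wedge_aab a b : collinear a b -> wedge a (wedge a b) = b.
Proof.
move=> h; apply: val_inj; rewrite !wedgeE.
exact: lineF3 (invol a) (invol b) (braidP h).
Qed.

Lemma wedge_bab a b : collinear a b -> wedge b (wedge a b) = a.
Proof.
move=> h; apply: val_inj; rewrite !wedgeE.
exact: lineF4 (invol a) (invol b) (braidP h).
Qed.

Lemma wedge_wba a b : collinear a b -> wedge (wedge a b) a = b.
Proof.
move=> h; apply: val_inj; rewrite !wedgeE.
exact: lineF5 (invol a) (invol b) (braidP h).
Qed.

Lemma col_aw a b : collinear a b -> collinear a (wedge a b).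
Proof.
move=> h; have := h; rewrite !colE wedgeE; apply: contra => /eqP e.
have ha := invol a; have hb := invol b; have hab := braidP h.
rewrite -hab !mulgA ha mul1g (cc _ ha) in e.
by rewrite e.
Qed.

Lemma col_bw a b : collinear a b -> collinear b (wedge a b).
Proof. by move=> h; rewrite wedgeC // col_aw // colC. Qed.


Lemma ncolE a b : ~~ collinear a b -> (val a * val b = val b * val a)%g.
Proof. by rewrite colE negbK => /eqP. Qed.

Lemma ncol_comm a b c : ~~ collinear c a -> ~~ collinear c b ->
  ~~ collinear c (wedge a b).
Proof.
move=> /ncolE ha /ncolE hb; rewrite colE wedgeE negbK; apply/eqP.
by apply: commuteM; [apply: commuteM|].
Qed.

Lemma col_J2a a b c : collinear a b -> ~~ collinear a c ->
  collinear a (wedge b c).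
Proof.
move=> hab /ncolE hac; have := hab; rewrite !colE wedgeE.
apply: contra => /eqP e; apply/eqP.
exact: F7 (invol b) (invol c) (esym hac) e.
Qed.

Lemma col_J2c a b c : collinear a b -> collinear b c -> ~~ collinear a c ->
  collinear c (wedge a b).
Proof.
move=> hab hbc hac; rewrite (wedgeC hab); apply: col_J2a; first by rewrite colC.
by rewrite colC.
Qed.

Lemma wedge_J2 a b c : collinear a b -> collinear b c -> ~~ collinear a c ->
  wedge a (wedge b c) = wedge c (wedge a b).
Proof.
move=> hab hbc /ncolE hac; apply: val_inj; rewrite !wedgeE.
exact: F6 (invol a) (invol b) (invol c) hac (braidP hab) (braidP hbc).
Qed.

Lemma N1 a b c : collinear b c -> a = wedge b c -> c = wedge a b.
Proof.
move=> hbc e; apply: val_inj; rewrite wedgeE.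
apply/esym/N1w; [exact: invol|exact: invol|exact: braidP|].
by rewrite e wedgeE.
Qed.

Lemma colneq x y : collinear x y -> x <> y.
Proof. by case/andP => h _ e; rewrite e eqxx in h. Qed.

Lemma conj_swap x y (w : point D) : val x = (val w * val y * val w)%g ->
  val y = (val w * val x * val w)%g.
Proof.
move=> ->; have hw := invol w.
by apply: (@mulgI _ 1%g); rewrite !mulgA (cc _ hw) (cc _ hw).
Qed.

End Pts.
Import GRing.Theory.
Local Open Scope ring_scope.

Section Abs.
Variables (G : groupType) (D : {pred G}) (R : comNzRingType).
Hypothesis HGD : three_transposition_group D.
Hypothesis HR2 : 2%:R = 0 :> R.
Hypothesis SL : forall a b c : point D, collinear a b -> collinear b c ->
  collinear c a -> c <> wedge a b -> ~~ collinear c (wedge a b).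
Variables (V : lmodType R) (coef : point D -> V -> R).
Hypothesis coefD : forall k u v, coef k (u + v) = coef k u + coef k v.
Hypothesis coef_inj : forall u v, (forall k, coef k u = coef k v) -> u = v.
Variables (bl : point D -> V) (mp : V -> V -> V).
Implicit Types a b c : point D.

Definition bp a b : V := if collinear a b then bl a + bl b + bl (wedge a b) else 0.

Hypothesis mpDl : forall u w v, mp (u + w) v = mp u v + mp w v.
Hypothesis mpZl : forall x u v, mp (x *: u) v = x *: mp u v.
Hypothesis mpC : forall u v, mp u v = mp v u.
Hypothesis mpU : forall a b, mp (bl a) (bl b) = bp a b.
Hypothesis ind0 : forall f : V -> V, (forall u w, f (u + w) = f u + f w) ->
  (forall x u, f (x *: u) = x *: f u) -> (forall x, f (bl x) = 0) ->
  forall u, f u = 0.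

Lemma coef0 k : coef k 0 = 0.
Proof.
have := coefD k 0 0; rewrite addr0 => h.
have := congr1 (fun x => x - coef k 0) h; rewrite /= addrK subrr.
by move=> ->.
Qed.

Lemma solR (x y z : R) : x + y + z = 0 -> z = x + y.
Proof.
move=> h; transitivity (x + y + z + (x + y)); first by ring: HR2.
by rewrite h add0r.
Qed.

Lemma solM (x y z : R) : x + y + z = 0 -> y = x + z.
Proof. by move=> h; apply: solR; rewrite -h; ring. Qed.

Lemma solL (x y z : R) : x + y + z = 0 -> x = y + z.
Proof. by move=> h; apply: solR; rewrite -h; ring. Qed.

Lemma addvv (v : V) : v + v = 0.
Proof. by apply: coef_inj => k; rewrite coefD coef0; ring: HR2. Qed.

Lemma mpDr u w v : mp v (u + w) = mp v u + mp v w.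
Proof. by rewrite mpC mpDl !(mpC v). Qed.

Lemma mpZr x u v : mp v (x *: u) = x *: mp v u.
Proof. by rewrite mpC mpZl mpC. Qed.

Lemma mp0r v : mp v 0 = 0.
Proof.
have e : (0 : V) = (0 : R) *: (0 : V) by rewrite scale0r.
by rewrite [in LHS]e mpZr scale0r.
Qed.

Lemma mp0l v : mp 0 v = 0.
Proof. by rewrite mpC mp0r. Qed.

Ltac c2ring := apply/eqP; rewrite -subr_eq0; apply/eqP; ring: HR2.
Ltac cring := apply: coef_inj => ?; rewrite ?coefD ?coef0; c2ring.

Lemma bpC a b : bp a b = bp b a.
Proof.
rewrite /bp (colC HGD a b); case h: (collinear b a) => //.
by rewrite (wedgeC HGD h); cring.
Qed.

Lemma mpLine a b c : mp (bl a) (bl b + bl c + bl (wedge b c)) =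
  bp a b + bp a c + bp a (wedge b c).
Proof. by rewrite !mpDr !mpU. Qed.

Definition Jac (u v w : V) := mp u (mp v w) + mp v (mp w u) + mp w (mp u v).

Lemma JacC u v w : Jac u v w = Jac v w u.
Proof. by rewrite /Jac -addrA addrC. Qed.

Lemma JacC2 u v w : Jac u v w = Jac w u v.
Proof. by rewrite JacC JacC. Qed.

Lemma J1 a b c : collinear a b -> ~~ collinear b c -> ~~ collinear c a ->
  Jac (bl a) (bl b) (bl c) = 0.
Proof.
move=> hab hbc hca.
have hcb : ~~ collinear c b by rewrite (colC HGD c b).
have hcw := ncol_comm HGD hca hcb.
rewrite /Jac !mpU /bp (negbTE hbc) (negbTE hca) hab !mp0r mpLine /bp.
by rewrite (negbTE hca) (negbTE hcb) (negbTE hcw) !addr0.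
Qed.

Lemma J2 a b c : collinear a b -> collinear b c -> ~~ collinear c a ->
  Jac (bl a) (bl b) (bl c) = 0.
Proof.
move=> hab hbc hca.
case: (eqVneq a c) => [eac|hac].
  subst c.
  rewrite /Jac !mpU (bpC b a) /bp (colxx HGD a) mp0r addr0.
  exact: addvv.
have hac' : ~~ collinear a c by rewrite (colC HGD a c).
have hcb : collinear c b by rewrite (colC HGD c b).
have h1 := col_J2a HGD hab hac'.
have h2 := col_J2c HGD hab hbc hac'.
rewrite /Jac !mpU /bp hbc (negbTE hca) hab mp0r !mpLine /bp.
rewrite hab (negbTE hac') h1 (negbTE hca) hcb h2.
rewrite (wedgeC HGD hcb) (wedge_J2 HGD hab hbc hac').
cring.
Qed.

Lemma J3 a b c : collinear a b -> collinear b c -> collinear c a ->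
  Jac (bl a) (bl b) (bl c) = 0.
Proof.
move=> hab hbc hca.
have Z : bp a (wedge b c) + bp b (wedge c a) + bp c (wedge a b) = 0.
  case: (eqVneq c (wedge a b)) => hc.
    have e1 : wedge b c = a by rewrite hc (wedge_bab HGD hab).
    have e2 : wedge c a = b by rewrite hc (wedge_wba HGD hab).
    rewrite e1 e2 -hc /bp !(colxx HGD) !addr0.
    by [].
  have z3 : ~~ collinear c (wedge a b) by apply: SL => // e; rewrite e eqxx in hc.
  have z1 : ~~ collinear a (wedge b c).
    apply: SL => // e; have e' := N1 HGD hbc e.
    by rewrite e' eqxx in hc.
  have z2 : ~~ collinear b (wedge c a).
    apply: SL => // e; have e' := N1 HGD hca e.
    have e'' := N1 HGD hbc e'.
    by rewrite e'' eqxx in hc.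
  by rewrite /bp (negbTE z1) (negbTE z2) (negbTE z3) !addr0.
rewrite /Jac !mpU {1}/bp hbc {1}/bp hca {1}/bp hab !mpLine.
rewrite (bpC b a) (bpC a c) (bpC c b).
apply: coef_inj => k; have Zk := congr1 (coef k) Z.
rewrite !coefD coef0 in Zk; rewrite !coefD coef0 (solR Zk).
ring: HR2.
Qed.

Lemma Jall a b c : Jac (bl a) (bl b) (bl c) = 0.
Proof.
case hab: (collinear a b); case hbc: (collinear b c); case hca: (collinear c a).
- exact: J3.
- by apply: J2; rewrite ?hca.
- by rewrite JacC2; apply: J2; rewrite ?hbc.
- by apply: J1; rewrite ?hbc ?hca.
- by rewrite JacC; apply: J2; rewrite ?hab.
- by rewrite JacC; apply: J1; rewrite ?hca ?hab.
- by rewrite JacC2; apply: J1; rewrite ?hab ?hbc.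
by rewrite /Jac !mpU /bp hab hbc hca !mp0r !addr0.
Qed.

Lemma JacDl u u' v w : Jac (u + u') v w = Jac u v w + Jac u' v w.
Proof.
rewrite /Jac !(mpDl, mpDr).
by apply: coef_inj => k; rewrite !coefD; ring.
Qed.

Lemma JacZl x u v w : Jac (x *: u) v w = x *: Jac u v w.
Proof. by rewrite /Jac !(mpZl, mpZr) !scalerDr. Qed.

Lemma Jac_ext u v w : Jac u v w = 0.
Proof.
have h2 : forall b c u, Jac u (bl b) (bl c) = 0.
  move=> b c; apply: ind0 => [u1 w1|x u1|x]; rewrite ?JacDl ?JacZl //.
  exact: Jall.
have h3 : forall c u v, Jac u v (bl c) = 0.
  move=> c u1; apply: ind0 => [v1 w1|x v1|x]; last exact: h2.
  - by rewrite !(JacC u1) JacDl.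
  - by rewrite !(JacC u1) JacZl.
move: w; apply: ind0 => [w w'|x w|x]; last exact: h3.
- by rewrite !(@JacC2 u v) JacDl.
- by rewrite !(@JacC2 u v) JacZl.
Qed.

Lemma ss0 s u : mp (bl s) (mp (bl s) u) = 0.
Proof.
move: u; apply: ind0 => [u w|x u|x].
- by rewrite !mpDr.
- by rewrite !mpZr.
rewrite mpU /bp; case h: (collinear s x); last by rewrite mp0r.
rewrite mpLine /bp (colxx HGD) h (col_aw HGD h) (wedge_aab HGD h).
cring.
Qed.

Lemma deriv l u v : mp l (mp u v) = mp u (mp l v) + mp (mp l u) v.
Proof.
have := Jac_ext l u v; rewrite /Jac (mpC v l) (mpC v (mp l u)) => h.
apply: coef_inj => k; have hk := congr1 (coef k) h.
rewrite !coefD coef0 in hk; rewrite !coefD (solL hk).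
ring: HR2.
Qed.

Lemma idem p q : collinear p q ->
  forall u, mp (bl p + bl q + bl (wedge p q)) (mp (bl p + bl q + bl (wedge p q)) u)
          = mp (bl p + bl q + bl (wedge p q)) u.
Proof.
move=> hpq u.
set r := wedge p q.
set L := bl p + bl q + bl r.
have ePQ : mp (bl p) (bl q) = L by rewrite mpU /bp hpq.
have ePR : mp (bl p) (bl r) = L.
  rewrite mpU /bp (col_aw HGD hpq) /r (wedge_aab HGD hpq) /L /r; cring.
have eQR : mp (bl q) (bl r) = L.
  rewrite mpU /bp (col_bw HGD hpq) /r (wedge_bab HGD hpq) /L /r; cring.
have j1 := Jac_ext (bl p) (bl q) u.
have j2 := Jac_ext (bl p) (bl r) u.
have j3 := Jac_ext (bl q) (bl r) u.
rewrite /Jac ?ePQ ?ePR ?eQR (mpC u L) in j1 j2 j3.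
rewrite ?(mpC u (bl p)) ?(mpC u (bl q)) ?(mpC u (bl r)) in j1 j2 j3.
have s1 := ss0 p u; have s2 := ss0 q u; have s3 := ss0 r u.
rewrite /L in j1 j2 j3 *.
rewrite ?mpDl ?mpDr ?mpDl in j1 j2 j3 *.
apply: coef_inj => k.
move: (congr1 (coef k) j1) (congr1 (coef k) j2) (congr1 (coef k) j3).
move: (congr1 (coef k) s1) (congr1 (coef k) s2) (congr1 (coef k) s3).
rewrite !coefD !coef0 => k1 k2 k3 k4 k5 k6.
rewrite k1 k2 k3 (solM k4) (solM k5) (solM k6).

c2ring.
Qed.

Theorem abs_main p q (hpq : collinear p q) :
  let l := bl p + bl q + bl (wedge p q) in
  let A0 := fun v => mp l v = 0 in
  let A1 := fun v => mp l v = v in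
  [/\ (forall v : V, exists v0 v1, [/\ A0 v0, A1 v1 & v = v0 + v1]),
      (forall v : V, A0 v -> A1 v -> v = 0),
      (forall u v, A0 u -> A0 v -> A0 (mp u v)),
      (forall u v, A0 u -> A1 v -> A1 (mp u v)) &
      [/\ (forall u v, A1 u -> A0 v -> A1 (mp u v)) &
          (forall u v, A1 u -> A1 v -> A0 (mp u v))]].
Proof.
move=> l A0 A1; have hid := idem hpq.
split.
- move=> v; exists (v + mp l v), (mp l v); split.
  + by rewrite /A0 mpDr hid addvv.
  + exact: hid.
  + by rewrite -addrA addvv addr0.
- by move=> v h0 h1; rewrite -h1 h0.
- by move=> u v h0 h1; rewrite /A0 deriv h0 h1 mp0r mp0l addr0.
- by move=> u v h0 h1; rewrite /A1 deriv h0 h1 mp0l addr0.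
split.
- by move=> u v h0 h1; rewrite /A1 deriv h0 h1 mp0r add0r.
- by move=> u v h0 h1; rewrite /A0 deriv h0 h1 addvv.
Qed.

End Abs.
Section Lin.
Variables (G : groupType) (D : {pred G}) (R : comNzRingType).
Hypothesis bprodC : forall a b : point D, bprod R a b = bprod R b a.
Local Notation M := (matsuo D R).
Fact mp_key : unit. Proof. by []. Qed.
Definition mp : M -> M -> M := locked_with mp_key (@mprod G D R).
Lemma mpE : @mprod G D R = mp. Proof. by rewrite /mp unlock. Qed.

Lemma mprodEw (S T : {fset point D}) (u v : M) :
  (msupp u `<=` S)%fset -> (msupp v `<=` T)%fset ->
  mp u v = \sum_(p <- S) \sum_(q <- T) (u@_p * v@_q) *: bprod R p q.
Proof.
move=> hS hT; rewrite -mpE /mprod.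
transitivity (\sum_(p <- msupp u) \sum_(q <- T) (u@_p * v@_q) *: bprod R p q).
  apply: eq_bigr => p _; apply: big_fset_incl => // x _ /mcoeff_outdom ->.
  by rewrite mulr0 scale0r.
apply: big_fset_incl => // x _ /mcoeff_outdom ->.
by rewrite big1 // => q _; rewrite mul0r scale0r.
Qed.


Lemma mprodDl (u w v : M) : mp (u + w) v = mp u v + mp w v.
Proof.
have hS := @monalg.msuppD_le (point D) R u w.
rewrite !(@mprodEw (msupp u `|` msupp w)%fset (msupp v)) ?fsubsetUl ?fsubsetUr //.
rewrite -big_split; apply: eq_bigr => p _; rewrite -big_split.
by apply: eq_bigr => q _; rewrite mcoeffD mulrDl scalerDl.
Qed.

Lemma mprodZl a (u v : M) : mp (a *: u) v = a *: mp u v.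
Proof.
rewrite !(@mprodEw (msupp u) (msupp v)) ?msuppZ_le //.
rewrite scaler_sumr; apply: eq_bigr => p _; rewrite scaler_sumr.
by apply: eq_bigr => q _; rewrite mcoeffZ scalerA mulrA.
Qed.

Lemma mprodC (u v : M) : mp u v = mp v u.
Proof.
rewrite (mprodEw (fsubset_refl (msupp u)) (fsubset_refl (msupp v))).
rewrite (mprodEw (fsubset_refl (msupp v)) (fsubset_refl (msupp u))).
rewrite exchange_big.
apply: eq_bigr => p _.
apply: eq_bigr => q _.
rewrite (mulrC (u@_q)).
by rewrite bprodC.
Qed.

Lemma mprodDr (u w v : M) : mp v (u + w) = mp v u + mp v w.
Proof. by rewrite mprodC mprodDl !(mprodC v). Qed.

Lemma mprodZr a (u v : M) : mp v (a *: u) = a *: mp v u.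
Proof. by rewrite mprodC mprodZl mprodC. Qed.

Lemma mprodU (a b : point D) : mp << a >> << b >> = bprod R a b.
Proof.
rewrite (@mprodEw [fset a]%fset [fset b]%fset) ?msuppU_le // !big_seq_fset1.
by rewrite !mcoeffUU mulr1 scale1r.
Qed.

Lemma mprod0l (v : M) : mp 0 v = 0.
Proof. have e : (0 : M) = (0 : R) *: (0 : M) by rewrite scale0r.
by rewrite [in LHS]e mprodZl scale0r. Qed.

Lemma mprod0r (v : M) : mp v 0 = 0.
Proof. by rewrite mprodC mprod0l. Qed.

Lemma monalgUZ (c : R) (k : point D) : << c *g k >> = c *: (<< k >> : M).
Proof. by apply/malgP => k'; rewrite mcoeffZ !mcoeffU mulr_natr. Qed.

Lemma malg_ind0 (f : M -> M) : (forall u w, f (u + w) = f u + f w) ->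
  (forall a u, f (a *: u) = a *: f u) -> (forall x, f << x >> = 0) ->
  forall u, f u = 0.
Proof.
move=> fD fZ fU u; rewrite (monalgE u).
apply: (big_ind (fun x => f x = 0)).
- have e : (0 : M) = (0 : R) *: (0 : M) by rewrite scale0r.
  by rewrite e fZ scale0r.
- by move=> x y hx hy; rewrite fD hx hy addr0.
by move=> k _; rewrite monalgUZ fZ fU scaler0.
Qed.

End Lin.

Section Symp.
Variables (G : groupType) (D : {pred G}).
Hypothesis HGD : three_transposition_group D.
Hypothesis Hsymp : symplectic_type D.
Implicit Types a b c x y : point D.

Lemma gen_in (X : point D -> Prop) x : X x -> gen_subspace X x.
Proof. by move=> hx S hS _; apply: hS. Qed.

Lemma gen_wedge (X : point D -> Prop) x y : collinear x y ->
  gen_subspace X x -> gen_subspace X y -> gen_subspace X (wedge x y).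
Proof. by move=> hxy hx hy S hS hw; apply: (hw); [exact: hxy|exact: (hx S hS hw)|exact: (hy S hS hw)]. Qed.

Lemma line_is x y : collinear x y ->
  is_line (fun z => z = x \/ z = y \/ z = wedge x y).
Proof. by move=> h; exists x, y; split. Qed.

Lemma SLp a b c : collinear a b -> collinear b c -> collinear c a ->
  c <> wedge a b -> ~~ collinear c (wedge a b).
Proof.
move=> hab hbc hca hc; apply/negP => hcw.
pose l1 := fun z => z = a \/ z = b \/ z = wedge a b.
pose l2 := fun z => z = c \/ z = a \/ z = wedge c a.
have nca : c <> a := colneq hca.
have nbc : b <> c := colneq hbc.
have nab : a <> b := colneq hab.
have hneq : ~ (forall x, l1 x <-> l2 x).
  move=> h; have : l1 c by apply/h; left.
  by case=> [//|[e|//]]; apply: nbc.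
have [pts [lns [[upts _] Spts ulns _ [_ Hall _ Hcount]]]] :=
  Hsymp (line_is hab) (line_is hca) (ex_intro _ a (conj (or_introl erefl)
     (or_intror (or_introl erefl)))) hneq.
set S := gen_subspace _ in Spts Hall.
have Sa : S a by apply: gen_in; left; left.
have Sb : S b by apply: gen_in; left; right; left.
have Sc : S c by apply: gen_in; right; left.
have Sab : S (wedge a b) by apply: gen_in; left; right; right.
have sub : forall x y, collinear x y -> S x -> S y ->
    forall z, z = x \/ z = y \/ z = wedge x y -> S z.
  move=> x y hxy hx hy z [->|[->|->]] //; exact: gen_wedge.
have hcb : collinear c b by rewrite (colC HGD).
have [l1' l1in l1E] := Hall _ (line_is hca) (sub _ _ hca Sc Sa).
have [l2' l2in l2E] := Hall _ (line_is hcb) (sub _ _ hcb Sc Sb).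
have [l3' l3in l3E] := Hall _ (line_is hcw) (sub _ _ hcw Sc Sab).
have c1 : c \in l1' by apply/l1E; left.
have c2 : c \in l2' by apply/l2E; left.
have c3 : c \in l3' by apply/l3E; left.
have a1 : a \in l1' by apply/l1E; right; left.
have b2 : b \in l2' by apply/l2E; right; left.
have a2 : a \notin l2'.
  apply/negP => /l2E [e|[e|e]].
  + by apply: nca; rewrite e.
  + by apply: nab.
  + apply: hc; apply: val_inj; rewrite (wedgeE HGD).
    by apply: (conj_swap HGD); rewrite e (wedgeE HGD).
have a3 : a \notin l3'.
  apply/negP => /l3E [e1|[e2|e3]].
  + by apply: nca; rewrite e1.
  + by apply: (colneq (col_aw HGD hab)).
  + apply: nbc; apply: val_inj.
    have h3 : val a = (val (wedge a b) * val c * val (wedge a b))%g.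
      by rewrite {1}e3 (wedgeE HGD).
    by rewrite (conj_swap HGD h3) -(wedgeE HGD a (wedge a b)) (wedge_aab HGD hab).
have b3 : b \notin l3'.
  apply/negP => /l3E [e1|[e2|e3]].
  + by apply: nbc; rewrite e1.
  + by apply: (colneq (col_bw HGD hab)).
  + apply: nca; apply: val_inj.
    have h3 : val b = (val (wedge a b) * val c * val (wedge a b))%g.
      by rewrite {1}e3 (wedgeE HGD).
    by rewrite (conj_swap HGD h3) -(wedgeE HGD b (wedge a b)) (wedge_bab HGD hab).
have cpts : c \in pts by apply/Spts.
have := Hcount _ cpts.
have : (3 <= count (fun l => c \in l) lns)%N.
  rewrite -size_filter.
  have -> : 3%N = size [:: l1'; l2'; l3'] by [].
  apply: uniq_leq_size.
    rewrite /= !inE negb_or andbT; apply/andP; split; [apply/andP; split|].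
    - by apply: (contraNneq _ a2) => <-.
    - by apply: (contraNneq _ a3) => <-.
    - by apply: (contraNneq _ b3) => <-.
  by move=> x; rewrite !inE mem_filter => /or3P [] /eqP ->; apply/andP.
by move=> h e; rewrite e in h.
Qed.

End Symp.

Unset Implicit Arguments.

Theorem theorem5p24 (G : groupType) (D : {pred G}) (R : comNzRingType)
    (HGD : three_transposition_group D)
    (Hsymp : symplectic_type D)
    (HR2 : 2%:R = 0 :> R)
    (p q : point D) (Hpq : collinear p q) :
  let l : matsuo D R := line_elt R p q in
  let A0 := eigen0 l in
  let A1 := eigen1 l in
  [/\ (* A = A0 (+) A1 *)
      (forall v : matsuo D R, exists v0 v1, [/\ A0 v0, A1 v1 & v = v0 + v1]),
      (forall v : matsuo D R, A0 v -> A1 v -> v = 0),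
      (* fusion law: 0*0 = {0}, 0*1 = 1*0 = {1}, 1*1 = {0} *)
      (forall u v, A0 u -> A0 v -> A0 (mprod u v)),
      (forall u v, A0 u -> A1 v -> A1 (mprod u v)) &
      [/\ (forall u v, A1 u -> A0 v -> A1 (mprod u v)) &
          (forall u v, A1 u -> A1 v -> A0 (mprod u v))]].
Proof.
have cD : forall k (u v : matsuo D R), (u + v)@_k = u@_k + v@_k.
  by move=> k u v; exact: mcoeffD.
have cI : forall u v : matsuo D R, (forall k, u@_k = v@_k) -> u = v.
  by move=> u v h; apply/malgP.
have bC : forall a b : point D, bprod R a b = bprod R b a :=
  fun a b => bpC HGD HR2 cD cI (fun x => << x >>) a b.
have mDl : forall u w v : matsuo D R, mprod (u + w) v = mprod u v + mprod w v.
  by move=> u w v; rewrite mpE; exact: mprodDl.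
have mZl : forall x (u v : matsuo D R), mprod (x *: u) v = x *: mprod u v.
  by move=> x u v; rewrite mpE; exact: mprodZl.
have mC : forall u v : matsuo D R, mprod u v = mprod v u.
  by move=> u v; rewrite mpE; exact: (mprodC bC).
have mU : forall a b : point D, mprod << a >> << b >> = bprod R a b.
  by move=> a b; rewrite mpE; exact: mprodU.
exact: (@abs_main G D R HGD HR2 (SLp HGD Hsymp) (matsuo D R)
  (fun k v => v@_k) cD cI (fun x => << x >>) (@mprod G D R) mDl mZl mC mU
  (@malg_ind0 G D R) p q Hpq).
Qed.
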